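(* For every positive integer $n$ and every partition $\alpha\in\mathcal{P}(n)$ there exist unique integers $q>0$ and $s_1,\dots,s_q\ge0$ such that \[\delta(\alpha)=\big(1,2,\dots,q-1,q,q^{(s_q)},(q-1)^{(s_{q-1})},\dots,1^{(s_1)}\big),\] and these satisfy $\frac{q(q+1)}{2}+\sum_{k=1}^q k\,s_k=n$.
   Context: A partition of a positive integer $n$ is a finite non-increasing sequence $\alpha=(\alpha_1,\dots,\alpha_l)$ of positive integers with sum $n$; $\mathcal{P}(n)$ is the set of partitions of $n$, and $\alpha_i=0$ for $i>l$. The diagonal sequence is $\delta(\alpha)=(d_k)_{k\ge1}$ with $d_k=|\{i:1\le i\le k,\ \alpha_i+i-1\ge k\}|$, trailing zeros omitted. The notation $j^{(s)}$ denotes $s$ consecutive entries equal to $j$. *)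

(* Defs.v *)
From mathcomp Require Import all_boot.
Set Implicit Arguments. Unset Strict Implicit. Unset Printing Implicit Defensive.

(* A partition of n: a finite non-increasing sequence of positive integers
   with sum n.  alpha_i (1-based) is [nth 0 alpha (i-1)], which is 0 for i > l. *)
Definition is_partition (n : nat) (alpha : seq nat) : Prop :=
  [/\ sorted geq alpha, all (fun x => 0 < x) alpha & sumn alpha = n].

(* d_k = #{ i : 1 <= i <= k, alpha_i + i - 1 >= k }; with 0-based j = i-1,
   the condition reads  k <= alpha_(j+1) + j. *)
Definition diag_entry (alpha : seq nat) (k : nat) : nat :=
  count (fun j => k <= nth 0 alpha j + j) (iota 0 k).

Definition rtrim (s : seq nat) : seq nat :=
  rev (drop (find (fun x => x != 0) (rev s)) (rev s)).

(* The diagonal sequence (d_k)_{k>=1} with trailing zeros omitted.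
   d_k = 0 for all k >= sumn alpha + size alpha (any index i with
   alpha_i + i - 1 >= k must satisfy i <= size alpha), so listing
   d_1, ..., d_(sumn alpha + size alpha) and trimming gives exactly the
   nonzero part. *)
Definition delta (alpha : seq nat) : seq nat :=
  rtrim [seq diag_entry alpha k | k <- iota 1 (sumn alpha + size alpha)].

(* The sequence (1,2,...,q, q^(s_q), (q-1)^(s_(q-1)), ..., 1^(s_1)),
   where s_k = nth 0 s (k-1). *)
Definition diag_shape (q : nat) (s : seq nat) : seq nat :=
  iota 1 q ++ flatten [seq nseq (nth 0 s k.-1) k | k <- rev (iota 1 q)].

(* Main.v *)
Require Import Defs.
From mathcomp Require Import all_boot zify.


Section Part.
Variable alpha : seq nat.
Hypothesis Hsort : sorted geq alpha.
Hypothesis Hpos : all (fun x => 0 < x) alpha.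

Definition ff j := nth 0 alpha j + j.

Lemma nth_noninc_gen (s : seq nat) j : sorted geq s -> nth 0 s j.+1 <= nth 0 s j.
Proof.
elim: s j => [|x s IH] j //= Hp.
have Hs : sorted geq s by apply: path_sorted Hp.
case: j => [|j] /=.
  by case: s Hp {IH Hs} => [|y s] //= /andP[].
exact: IH.
Qed.

Lemma ff_step j : ff j.+1 <= (ff j).+1.
Proof. rewrite /ff; have := @nth_noninc_gen alpha j Hsort; lia. Qed.

Lemma ivt j m v : j <= m -> ff j <= v <= ff m -> exists2 j', j <= j' <= m & ff j' = v.
Proof.
elim: m => [|m IH] Hjm /andP[H1 H2].
  have ->: j = 0 by lia.
  exists 0 => //; move: H1 H2; rewrite (_ : j = 0); [lia|lia].
case: (eqVneq (ff m.+1) v) => [<-|Hne]; first by exists m.+1; rewrite ?leqnn ?Hjm.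
have Hjm' : j <= m.
  case: (ltngtP j m.+1) Hjm => // Hj _; subst; lia.
have := ff_step m => Hs.
have [j' Hj' Hf] : exists2 j', j <= j' <= m & ff j' = v by apply: IH => //; lia.
by exists j' => //; lia.
Qed.

Lemma pos_lt j : j < size alpha -> 0 < nth 0 alpha j.
Proof. by move=> Hj; apply: (allP Hpos); apply: mem_nth. Qed.

Definition PP k := (size alpha <= k) || has (fun j => ff j == k) (iota 0 k).

Lemma PP_succ k : PP k -> PP k.+1.
Proof.
rewrite /PP; case/orP => [H|]; first by rewrite (leq_trans H).
move=> Hh; case: (leqP (size alpha) k.+1) => // Hk; move: Hh =>  /hasP[j]; rewrite mem_iota add0n => /andP[_ Hjk] /eqP Hfj.
have Hfk : k.+1 <= ff k by rewrite /ff; have := @pos_lt k (ltnW Hk); lia.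
have [j' Hj' Hf'] := @ivt j k k.+1 (ltnW Hjk) ltac:(lia).
apply/orP; right; apply/hasP; exists j' => //; last by rewrite Hf'.
rewrite mem_iota; lia.
Qed.

Definition dd := diag_entry alpha.

Lemma count_add (T : Type) (a b c : pred T) s : (forall x, a x + b x = c x) ->
  count a s + count b s = count c s.
Proof. move=> H; elim: s => //= x s IH; rewrite -IH -H; lia. Qed.

Lemma dd_step k : dd k.+1 + count (fun j => ff j == k) (iota 0 k) = dd k + (k < size alpha).
Proof.
rewrite /dd /diag_entry.
have -> : iota 0 k.+1 = iota 0 k ++ [:: k] by rewrite -addn1 iotaD.
rewrite count_cat /=.
have -> : (k.+1 <= nth 0 alpha k + k) = (k < size alpha).
  case: (ltnP k (size alpha)) => Hk; first by have := @pos_lt k Hk; lia.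
  by rewrite nth_default //; lia.
rewrite -(@count_add nat (fun j => k.+1 <= nth 0 alpha j + j) (fun j => ff j == k) (fun j => k <= nth 0 alpha j + j)).
  lia.
move=> x; rewrite /ff; case: ltngtP => H; rewrite ?H //=; lia.
Qed.


Hypothesis Hne : 0 < size alpha.

Lemma dd_up k : ~~ PP k -> dd k.+1 = (dd k).+1.
Proof.
rewrite /PP negb_or -ltnNge has_count -leqNgt leqn0 => /andP[Hk /eqP Hc].
have := dd_step k; rewrite Hc Hk; lia.
Qed.

Lemma dd_down k : PP k -> dd k.+1 <= dd k.
Proof.
rewrite /PP => HP; have := dd_step k; case/orP: HP => [Hk|Hh].
  by rewrite ltnNge Hk /=; lia.
move: Hh; rewrite has_count; case: (k < size alpha) => /=; lia.
Qed.

Lemma exPP : exists k, PP k.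
Proof. by exists (size alpha); rewrite /PP leqnn. Qed.

Definition qq := ex_minn exPP.

Lemma qq_P : PP qq.
Proof. by rewrite /qq; case: ex_minnP. Qed.

Lemma qq_min k : PP k -> qq <= k.
Proof. by rewrite /qq; case: ex_minnP => m _ H; apply: H. Qed.

Lemma qq_pos : 0 < qq.
Proof.
rewrite lt0n; apply/negP => /eqP H0; have := qq_P; rewrite H0 /PP /= orbF leqn0 => /eqP; lia.
Qed.

Lemma qq_size : qq <= size alpha.
Proof. by apply: qq_min; rewrite /PP leqnn. Qed.

Lemma dd_small k : k <= qq -> dd k = k.
Proof.
elim: k => [|k IH] Hk; first by [].
rewrite dd_up ?IH //; first by apply: ltnW.
by apply/negP => /qq_min; lia.
Qed.

Lemma PP_ge k : qq <= k -> PP k.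
Proof.
elim: k => [|k IH] Hk; first by have H0 : qq = 0; [lia | rewrite -H0 qq_P].
case: (ltngtP qq k.+1) Hk => // H _; last by rewrite -H qq_P.
by apply: PP_succ; apply: IH.
Qed.

Lemma dd_noninc k : qq <= k -> dd k.+1 <= dd k.
Proof. by move=> H; apply: dd_down; apply: PP_ge. Qed.

Lemma dd_le_q k : qq <= k -> dd k <= qq.
Proof.
elim: k => [|k IH] Hk; first by [].
case: (ltngtP qq k.+1) Hk => // H _; last by rewrite -H dd_small.
exact: (leq_trans (dd_noninc k H) (IH H)).
Qed.

Lemma sorted_map_iota a m : sorted geq (map dd (iota (qq + a) m)).
Proof.
elim: m a => [|m IH] a //=.
case: m IH => [|m] IH //=.
rewrite dd_noninc ?leq_addr //=.
by have := IH a.+1; rewrite /= addnS.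
Qed.

Lemma count_big (a : pred nat) k M : k <= M ->
  count a (iota 0 k) = \sum_(0 <= j < M) ((j < k) && a j).
Proof.
move=> HkM.
rewrite -sumn_count sumnE big_map (big_cat_nat _ (n:=k)) //=.
rewrite [X in _ = _ + X]big_nat_cond [X in _ = _ + X]big1 ?addn0; last first.
  by move=> j /andP[/andP[Hkj _] _]; rewrite ltnNge Hkj.
rewrite /index_iota subn0; apply: eq_big_seq => j.
by rewrite mem_iota add0n => /andP[_ ->].
Qed.

Lemma cnt_big j m M : \sum_(0 <= k < M.+1) ((j < k) && (k <= m)) = minn M m - j.
Proof.
elim: M => [|M IH]; first by rewrite big_nat1 /=; lia.
rewrite big_nat_recr //= IH.
case: (ltnP j M.+1) => H1; case: (leqP M.+1 m) => H2 /=; lia.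
Qed.

Lemma nth_le_sumn (s : seq nat) j : nth 0 s j <= sumn s.
Proof. elim: s j => [|x s IH] j; first by rewrite nth_nil. case: j => [|j] /=; [lia | have := IH j; lia]. Qed.

Lemma sum_nth (s : seq nat) M : size s <= M -> \sum_(0 <= j < M) nth 0 s j = sumn s.
Proof.
elim: s M => [|x s IH] M /=.
  by move=> _; apply: big1_seq => j _; rewrite nth_nil.
case: M => [|M] // HM.
by rewrite big_nat_recl //= IH.
Qed.

Definition NN := sumn alpha + size alpha.

Lemma sum_dd : sumn (map dd (iota 1 NN)) = sumn alpha.
Proof.
rewrite sumnE big_map.
have -> : iota 1 NN = index_iota 1 NN.+1 by rewrite /index_iota subn1.
rewrite -[X in X = _]add0n -{1}[0]/(dd 0) -big_ltn //.
rewrite (eq_big_nat _ _ (F2 := fun k => \sum_(0 <= j < NN.+1) ((j < k) && (k <= ff j)))); last first.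
  by move=> k /andP[_ Hk]; rewrite /dd /diag_entry (count_big _ _ NN.+1) //; apply: ltnW.
rewrite exchange_big_nat -(@sum_nth alpha NN.+1); last by rewrite /NN; lia.
apply: eq_big_nat => j /andP[_ Hj].
rewrite cnt_big.
have : ff j <= NN.
  rewrite /ff /NN; case: (ltnP j (size alpha)) => H.
    have := @nth_le_sumn alpha j; lia.
  rewrite nth_default //; lia.
rewrite /ff; lia.
Qed.

End Part.

Set Implicit Arguments. Unset Strict Implicit. Unset Printing Implicit Defensive.

Lemma geq_trans : transitive geq.
Proof. by move=> a b c /= H1 H2; exact: leq_trans H2 H1. Qed.

Lemma sorted_split v (t : seq nat) : sorted geq t ->
  t = filter (fun x => v < x) t ++ filter (fun x => x <= v) t.
Proof.
elim: t => [|x s IH] //= Hp.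
have Hs : sorted geq s by apply: path_sorted Hp.
case: (ltnP v x) => Hvx /=.
  by rewrite {1}(IH Hs).
have Hall := order_path_min geq_trans Hp.
rewrite (@eq_in_filter _ _ pred0) ?filter_pred0; last first.
  by move=> y /(allP Hall) /= Hy; apply/negbTE; rewrite -leqNgt (leq_trans Hy).
rewrite (@eq_in_filter _ _ predT) ?filter_predT //.
by move=> y /(allP Hall) /= Hy; rewrite (leq_trans Hy).
Qed.

Lemma split0 (t : seq nat) : sorted geq t ->
  exists z, t = filter (fun x => 0 < x) t ++ nseq z 0.
Proof.
move=> Hs; exists (size (filter (fun x => x <= 0) t)).
rewrite {1}(sorted_split 0 Hs); congr (_ ++ _).
apply/all_pred1P; apply/allP => x; rewrite mem_filter => /andP[H _] /=; lia.
Qed.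

Lemma split_top q (t : seq nat) : sorted geq t -> all (fun x => x <= q.+1) t ->
  t = nseq (count_mem q.+1 t) q.+1 ++ filter (fun x => x <= q) t.
Proof.
move=> Hs Ha; rewrite {1}(sorted_split q Hs); congr (_ ++ _).
have Hall : all (pred1 q.+1) (filter (fun x => q < x) t).
  apply/allP => x; rewrite mem_filter => /andP[H1 H2] /=.
  have := allP Ha x H2 => /= H3; apply/eqP; lia.
rewrite {1}(all_pred1P _ _ Hall) size_filter; congr nseq.
apply: eq_in_count => x Hx /=; have := allP Ha x Hx => /= H3.
by apply/idP/eqP; lia.
Qed.

Lemma rtrim_cat (P : seq nat) z : all (fun x => 0 < x) P -> rtrim (P ++ nseq z 0) = P.
Proof.
move=> HP; rewrite /rtrim rev_cat rev_nseq find_cat has_nseq /= andbF size_nseq.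
have -> : find (fun x => x != 0) (rev P) = 0.
  case E: (rev P) => [|y r] //=.
  have : y \in rev P by rewrite E mem_head.
  by rewrite mem_rev => /(allP HP) /=; case: y {E}.
by rewrite addn0 drop_size_cat ?size_nseq // revK.
Qed.

Lemma shape_A q (t : seq nat) : sorted geq t -> all (fun x => 0 < x <= q) t ->
  t = flatten [seq nseq (count_mem k t) k | k <- rev (iota 1 q)].
Proof.
elim: q t => [|q IH] t Hs Ha.
  by case: t Ha {Hs} => [|x t] //= /andP[]; lia.
have -> : rev (iota 1 q.+1) = q.+1 :: rev (iota 1 q).
  by rewrite -[q.+1]addn1 iotaD rev_cat /= addnC.
rewrite /=; rewrite {1}(@split_top q t Hs); last first.
  by apply/allP => x /(allP Ha) /=; lia.
congr (_ ++ _).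
have Hs' : sorted geq (filter (fun x => x <= q) t).
  by apply: sorted_filter => //; apply: geq_trans.
have Ha' : all (fun x => 0 < x <= q) (filter (fun x => x <= q) t).
  by apply/allP => x; rewrite mem_filter => /andP[H1 /(allP Ha) /=]; lia.
rewrite {1}(IH _ Hs' Ha'); congr flatten; apply/eq_in_map => k.
rewrite mem_rev mem_iota => Hk; rewrite count_filter; congr nseq.
by apply: eq_count => x /=; apply/andP/eqP => [[/eqP]|->] //; split=> //; lia.
Qed.

Lemma count_flat (g : nat -> nat) k (r : seq nat) : uniq r ->
  count_mem k (flatten [seq nseq (g j) j | j <- r]) = if k \in r then g k else 0.
Proof.
elim: r => [|j r IH] //= /andP[Hj Hu].
rewrite count_cat count_nseq IH // in_cons.
case: (eqVneq k j) => [->|Hne] /=; first by rewrite eqxx (negbTE Hj); lia.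
by rewrite eq_sym (negbTE Hne).
Qed.

Definition flatp q (s : seq nat) := flatten [seq nseq (nth 0 s k.-1) k | k <- rev (iota 1 q)].

Lemma flatp_le q s x : x \in flatp q s -> 0 < x <= q.
Proof.
move=> /flattenP[l /mapP[k Hk ->]]; rewrite mem_nseq => /andP[_ /eqP ->].
by move: Hk; rewrite mem_rev mem_iota; lia.
Qed.

Lemma diag_nth1 q s : nth 0 (diag_shape q s) q <= q.
Proof.
rewrite /diag_shape nth_cat size_iota ltnn subnn -/(flatp q s).
case: (ltnP 0 (size (flatp q s))) => H.
  by have /andP[_ ->] := flatp_le (mem_nth 0 H).
by rewrite nth_default.
Qed.

Lemma diag_nth2 q q' s : q < q' -> nth 0 (diag_shape q' s) q = q.+1.
Proof. by move=> H; rewrite /diag_shape nth_cat size_iota H nth_iota // add1n. Qed.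

Lemma shape_B q s q' s' : size s = q -> size s' = q' ->
  diag_shape q s = diag_shape q' s' -> q' = q /\ s' = s.
Proof.
move=> Hs Hs' E.
have Hq : q' = q.
  case: (ltngtP q q') => // H.
    by have := diag_nth1 q s; rewrite E diag_nth2 //; lia.
  by have := diag_nth1 q' s'; rewrite -E diag_nth2 //; lia.
move: Hs' E; rewrite Hq => Hs' E; split => //.
have E2 : flatp q s' = flatp q s.
  move: E; rewrite /diag_shape -/(flatp q s) -/(flatp q s') => /eqP.
  by rewrite eqseq_cat // eqxx /= eq_sym => /eqP.
apply: (@eq_from_nth _ 0); first by rewrite Hs Hs'.
move=> i; rewrite Hs' => Hi.
have Hu : uniq (rev (iota 1 q)) by rewrite rev_uniq iota_uniq.
have Hm : i.+1 \in rev (iota 1 q) by rewrite mem_rev mem_iota; lia.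
have := count_flat (fun k => nth 0 s k.-1) i.+1 Hu.
have := count_flat (fun k => nth 0 s' k.-1) i.+1 Hu.
rewrite Hm /= -/(flatp q s) -/(flatp q s') E2 => -> //.
Qed.

Lemma sum_iota q : (sumn (iota 1 q)).*2 = q * q.+1.
Proof.
elim: q => [|q IH] //.
rewrite -[q.+1]addn1 iotaD sumn_cat doubleD IH /= add1n; lia.
Qed.

Lemma shape_C q s : sumn (diag_shape q s) =
  q * q.+1 %/ 2 + \sum_(1 <= k < q.+1) k * nth 0 s k.-1.
Proof.
rewrite /diag_shape sumn_cat.
have -> : q * q.+1 %/ 2 = sumn (iota 1 q) by rewrite -sum_iota -muln2 mulnK.
congr (_ + _).
rewrite sumn_flatten -map_comp sumnE big_map big_rev.
have -> : iota 1 q = index_iota 1 q.+1 by rewrite /index_iota subn1.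
by apply: eq_bigr => k _ /=; rewrite sumn_nseq mulnC.
Qed.


Theorem corollary2p2 (n : nat) (alpha : seq nat) :
  0 < n -> is_partition n alpha ->
  exists q : nat, exists s : seq nat,
    [/\ 0 < q, size s = q, delta alpha = diag_shape q s,
        forall (q' : nat) (s' : seq nat),
          0 < q' -> size s' = q' -> delta alpha = diag_shape q' s' ->
          q' = q /\ s' = s
      & q * q.+1 %/ 2 + \sum_(1 <= k < q.+1) k * nth 0 s k.-1 = n].
Proof.
move=> Hn [Hsort Hpos Hsum].
have Hne : 0 < size alpha by case: alpha Hsum {Hsort Hpos} => [|x a] //= H; rewrite -H in Hn.
set q := qq alpha.
have Hqs : q <= size alpha by apply: qq_size.
set T := map (dd alpha) (iota (q + 1) (NN alpha - q)).
have Hsplit : map (dd alpha) (iota 1 (NN alpha)) = iota 1 q ++ T.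
  have -> : NN alpha = q + (NN alpha - q) by rewrite /NN; lia.
  rewrite iotaD map_cat (addnC 1 q); congr (_ ++ _).
  by apply: map_id_in => k; rewrite mem_iota => Hk; apply: dd_small => //; lia.
have HTs : sorted geq T by apply: sorted_map_iota.
have HTa : all (fun x => x <= q) T.
  by apply/allP => x /mapP[k]; rewrite mem_iota => Hk ->; apply: dd_le_q => //; lia.
have [z Hz] := split0 HTs.
set T1 := filter (fun x => 0 < x) T in Hz.
have Hdelta : delta alpha = iota 1 q ++ T1.
  rewrite /delta; change (rtrim (map (dd alpha) (iota 1 (NN alpha))) = iota 1 q ++ T1).
  rewrite Hsplit Hz catA rtrim_cat // all_cat; apply/andP; split.
    by apply/allP => x; rewrite mem_iota; lia.
  by apply/allP => x; rewrite mem_filter => /andP[].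
have HT1s : sorted geq T1 by apply: sorted_filter => //; apply: geq_trans.
have HT1a : all (fun x => 0 < x <= q) T1.
  by apply/allP => x; rewrite mem_filter => /andP[H1 /(allP HTa) /= H2]; rewrite H1 H2.
set s := [seq count_mem k T1 | k <- iota 1 q].
have Hsz : size s = q by rewrite size_map size_iota.
have Hshape : delta alpha = diag_shape q s.
  rewrite Hdelta /diag_shape; congr (_ ++ _).
  rewrite {1}(shape_A HT1s HT1a); congr flatten; apply/eq_in_map => k.
  rewrite mem_rev mem_iota => Hk; rewrite (nth_map 0) ?size_iota; last by lia.
  rewrite nth_iota; last by lia.
  by have -> : 1 + k.-1 = k by lia.
exists q, s; split => //.
- exact: qq_pos.
- move=> q' s' _ Hs' E; apply: (shape_B Hsz Hs'); by rewrite -Hshape.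
- rewrite -shape_C -Hshape Hdelta -Hsum -(@sum_dd alpha Hsort Hpos Hne) Hsplit Hz catA.
  by rewrite [in RHS]sumn_cat sumn_nseq addn0.
Qed.
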